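(* For each of the three cases $d=2,4,8$ (the manifold of flags in the projective plane over $\mathbb C$, $\mathbb H$, $\mathbb O$), there exists a $G$-invariant metric on $M=G/K$ with positive definite Ricci tensor whose Ricci flow reaches, at some later time, a $G$-invariant metric whose Ricci tensor has signature $(d,2d)$, i.e. it has $d$ negative and $2d$ positive eigenvalues.
   Context: Let $(G,K,d)$ be one of the following three triples: - $(SU(3),T^2,2)$, with $T^2$ a maximal torus; - $(Sp(3),Sp(1)\times Sp(1)\times Sp(1),4)$; - (compact $F_4$, $Spin(8)$, $8$). Let $M=G/K$, a manifold of dimension $3d$. With the $\mathrm{Ad}(G)$-invariant inner product $\langle X,Y\rangle_0=-\tfrac12\mathrm{Re}\,\mathrm{tr}(XY)$ (for $F_4$, the invariant inner product agreeing with it on a compatibly embedded $Sp(3)$), let $\mathfrak p=\mathfrak k^\perp=V_1\oplus V_2\oplus V_3$ be the decomposition into three pairwise inequivalent irreducible $\mathrm{Ad}(K)$-invariant subspaces of dimension $d$. $G$-invariant metrics are $g\leftrightarrow(x_1,x_2,x_3)$, corresponding to $\sum_i x_i\langle\cdot,\cdot\rangle_0|_{V_i}$ with $x_i>0$. Their Ricci tensor is $\sum_i x_ir_i\langle\cdot,\cdot\rangle_0|_{V_i}$, where $$r_i=\frac{d x_i^2-d x_j^2-d x_k^2+(10d-8)x_jx_k}{2x_1x_2x_3},\qquad\{i,j,k\}=\{1,2,3\}.$$ The Ricci flow $\partial_tg=-2\mathrm{Ric}(g)$ on these metrics is the ODE system $\frac{dx_i}{dt}=-2r_ix_i$. *)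

(* Defs.v *)
From Stdlib Require Export Reals.
Open Scope R_scope.

(* Ricci eigenvalue r_i of the G-invariant metric (x_i, x_j, x_k) on V_i,
   where {i,j,k} = {1,2,3}:
   r_i = (d x_i^2 - d x_j^2 - d x_k^2 + (10d-8) x_j x_k) / (2 x_1 x_2 x_3). *)
Definition ric (d xi xj xk : R) : R :=
  (d * xi ^ 2 - d * xj ^ 2 - d * xk ^ 2 + (10 * d - 8) * xj * xk)
  / (2 * xi * xj * xk).

Definition r1 (d x1 x2 x3 : R) : R := ric d x1 x2 x3.
Definition r2 (d x1 x2 x3 : R) : R := ric d x2 x1 x3.
Definition r3 (d x1 x2 x3 : R) : R := ric d x3 x1 x2.

(* Ricci tensor sum_i x_i r_i <,>_0|V_i is positive definite w.r.t. g
   iff all r_i > 0 (x_i > 0). *)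
Definition ricci_pos_def (d x1 x2 x3 : R) : Prop :=
  0 < r1 d x1 x2 x3 /\ 0 < r2 d x1 x2 x3 /\ 0 < r3 d x1 x2 x3.

(* Signature (d, 2d): each r_i has multiplicity d, so exactly one r_i is
   negative and the other two are positive. *)
Definition ricci_signature_d_2d (d x1 x2 x3 : R) : Prop :=
  let a := r1 d x1 x2 x3 in let b := r2 d x1 x2 x3 in let c := r3 d x1 x2 x3 in
  (a < 0 /\ 0 < b /\ 0 < c) \/ (0 < a /\ b < 0 /\ 0 < c) \/
  (0 < a /\ 0 < b /\ c < 0).

Definition ricci_flow_on (d : R) (x1 x2 x3 : R -> R) (T : R) : Prop :=
  forall t, 0 <= t <= T ->
    0 < x1 t /\ 0 < x2 t /\ 0 < x3 t /\
    derivable_pt_lim x1 t (-2 * r1 d (x1 t) (x2 t) (x3 t) * x1 t) /\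
    derivable_pt_lim x2 t (-2 * r2 d (x1 t) (x2 t) (x3 t) * x2 t) /\
    derivable_pt_lim x3 t (-2 * r3 d (x1 t) (x2 t) (x3 t) * x3 t).

(* Main.v *)
Require Import Defs.
From Stdlib Require Import Reals.
From Stdlib Require Import Reals Lra Lia.
From Coquelicot Require Import Coquelicot.
Open Scope R_scope.

Definition c1 (v : R*R*R) := fst (fst v).
Definition c2 (v : R*R*R) := snd (fst v).
Definition c3 (v : R*R*R) := snd v.
Definition comp (i : nat) (v : R*R*R) : R :=
  match i with 0%nat => c1 v | 1%nat => c2 v | _ => c3 v end.
Definition vdist (v w : R*R*R) :=
  Rabs (c1 v - c1 w) + Rabs (c2 v - c2 w) + Rabs (c3 v - c3 w).

Lemma comp_min i v : comp i v = comp (Nat.min i 2) v.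
Proof. destruct i as [|[|[|i]]]; reflexivity. Qed.

Lemma Lip_cont (g : R -> R) x K : 0 <= K ->
  (forall y, Rabs (g y - g x) <= K * Rabs (y - x)) -> continuous g x.
Proof.
  intros HK H. apply continuity_pt_filterlim.
  intros eps Heps. exists (eps / (K + 1)). split.
  - apply Rdiv_lt_0_compat; lra.
  - intros y [_ Hy]. unfold R_dist in *. simpl in *. unfold R_dist in *.
    eapply Rle_lt_trans. apply H.
    apply Rle_lt_trans with (K * (eps / (K+1))).
    + apply Rmult_le_compat_l; lra.
    + assert (0 < eps / (K+1)) by (apply Rdiv_lt_0_compat; lra).
      assert (eps / (K+1) * (K + 1) = eps) by (field; lra).
      nra.
Qed.

Lemma exR (g : R -> R) x y : (forall z, continuous g z) -> ex_RInt g x y.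
Proof. intros H. apply (@ex_RInt_continuous R_CompleteNormedModule). intros; apply H. Qed.

Lemma RInt_abs_bound (g : R -> R) (x y K : R) :
  (forall z, continuous g z) ->
  (forall z, Rmin x y <= z <= Rmax x y -> Rabs (g z) <= K) ->
  Rabs (RInt g x y) <= K * Rabs (y - x).
Proof.
  intros Hc Hb.
  destruct (Rle_dec x y) as [Hxy|Hxy].
  - rewrite Rmin_left in Hb by lra. rewrite Rmax_right in Hb by lra.
    rewrite (Rabs_right (y - x)) by lra. rewrite Rmult_comm.
    apply abs_RInt_le_const; auto.
    apply exR; auto.
  - rewrite Rmin_right in Hb by lra. rewrite Rmax_left in Hb by lra.
    assert (E : RInt g x y = - RInt g y x).
    { rewrite <- opp_RInt_swap. reflexivity. apply exR; auto. }
    rewrite E, Rabs_Ropp. rewrite (Rabs_left (y - x)) by lra.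
    replace (- (y - x)) with (x - y) by ring. rewrite Rmult_comm.
    apply abs_RInt_le_const; auto. lra.
    apply exR; auto.
Qed.

Lemma RInt_diff (g : R -> R) t s : (forall z, continuous g z) ->
  RInt g 0 t - RInt g 0 s = RInt g s t.
Proof.
  intros Hc.
  rewrite <- (RInt_Chasles g s 0 t) by (apply exR; auto).
  rewrite <- (opp_RInt_swap g 0 s) by (apply exR; auto).
  unfold plus, opp. simpl. ring.
Qed.

Lemma RInt_sub (f g : R -> R) x y : (forall z, continuous f z) -> (forall z, continuous g z) ->
  RInt f x y - RInt g x y = RInt (fun z => f z - g z) x y.
Proof.
  intros Hf Hg. rewrite (RInt_minus f g) by (apply exR; auto).
  reflexivity.
Qed.

Lemma between0 t z : Rmin 0 t <= z <= Rmax 0 t -> Rabs z <= Rabs t.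
Proof. unfold Rmin, Rmax; destruct (Rle_dec 0 t); intros; split_Rabs; lra. Qed.

Lemma geom_tail (u : nat -> R) B : 0 <= B ->
  (forall n, Rabs (u (S n) - u n) <= B * (/2)^n) ->
  forall n k, Rabs (u (n + k)%nat - u n) <= 2 * B * ((/2)^n - (/2)^(n+k)).
Proof.
  intros HB H n k. induction k.
  - rewrite Nat.add_0_r. replace (u n - u n) with 0 by ring. rewrite Rabs_R0. lra.
  - rewrite Nat.add_succ_r. 
    assert (E : (/2)^(S (n+k)) = /2 * (/2)^(n+k)) by reflexivity.
    rewrite E.
    eapply Rle_trans. 
    replace (u (S (n+k)) - u n) with ((u (S (n+k)) - u (n+k)%nat) + (u (n+k)%nat - u n)) by ring.
    apply Rabs_triang.
    specialize (H (n+k)%nat). lra.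
Qed.

Lemma small_le a c K : 0 <= K -> (forall n, a <= c + K * (/2)^n) -> a <= c.
Proof.
  intros HK H. destruct (Rle_dec a c) as [h|h]; auto. exfalso.
  assert (Hp : 0 < (a - c) / (K + 1)) by (apply Rdiv_lt_0_compat; lra).
  destruct (pow_lt_1_zero (/2) ltac:(rewrite Rabs_right; lra) _ Hp) as [N HN].
  specialize (HN N (le_n N)). specialize (H N).
  rewrite Rabs_right in HN by (apply Rle_ge, pow_le; lra).
  assert (K * (/2)^N <= K * ((a - c) / (K+1))) by (apply Rmult_le_compat_l; lra).
  assert ((a - c) / (K+1) * (K + 1) = a - c) by (field; lra).
  assert (0 <= (/2)^N) by (apply pow_le; lra).
  nra.
Qed.

Lemma eps_le a c : (forall eps, 0 < eps -> a < c + eps) -> a <= c.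
Proof.
  intros H. destruct (Rle_dec a c) as [h|h]; auto. specialize (H ((a - c)/2)). lra.
Qed.
Lemma addsub (A X : R) : A + X - A = X. Proof. ring. Qed.
Lemma addsub2 (A X Y : R) : A + X - (A + Y) = X - Y. Proof. ring. Qed.

Section Picard.
Variable G : nat -> R*R*R -> R.
Variables L Mb Sl : R.
Variable a : R*R*R.
Hypothesis HL0 : 0 <= L.
Hypothesis HS : 0 < Sl.
Hypothesis HLS : 6 * L * Sl <= 1.
Hypothesis HMb : 0 <= Mb.
Hypothesis HGb : forall i v, Rabs (G i v) <= Mb.
Hypothesis HGl : forall i v w, Rabs (G i v - G i w) <= L * vdist v w.

Fixpoint pic (n : nat) (t : R) : R*R*R :=
  match n with
  | O => a
  | S n => (c1 a + RInt (fun s => G 0 (pic n s)) 0 t,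
            c2 a + RInt (fun s => G 1 (pic n s)) 0 t,
            c3 a + RInt (fun s => G 2 (pic n s)) 0 t)
  end.

Lemma comp_pic_S i n t : (i < 3)%nat ->
  comp i (pic (S n) t) = comp i a + RInt (fun s => G i (pic n s)) 0 t.
Proof. intros. destruct i as [|[|[|i]]]; try lia; reflexivity. Qed.

Lemma vdist_bound v w K : (forall i, (i < 3)%nat -> Rabs (comp i v - comp i w) <= K) ->
  vdist v w <= 3 * K.
Proof.
  intros H. unfold vdist.
  pose proof (H 0%nat ltac:(lia)). pose proof (H 1%nat ltac:(lia)).
  pose proof (H 2%nat ltac:(lia)). simpl in *. lra.
Qed.

Lemma G_cont (f : R -> R*R*R) K i : 0 <= K ->
  (forall j, (j < 3)%nat -> forall t s, Rabs (comp j (f t) - comp j (f s)) <= K * Rabs (t - s)) ->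
  forall z, continuous (fun s => G i (f s)) z.
Proof.
  intros HK Hf z. apply (Lip_cont _ _ (L * (3 * K))).
  - apply Rmult_le_pos; lra.
  - intros y. eapply Rle_trans. apply HGl. rewrite Rmult_assoc.
    apply Rmult_le_compat_l; auto.
    replace (3 * K * Rabs (y - z)) with (3 * (K * Rabs (y - z))) by ring.
    apply vdist_bound. intros; auto.
Qed.

Lemma pic_lip n : forall j, (j < 3)%nat -> forall t s,
  Rabs (comp j (pic n t) - comp j (pic n s)) <= Mb * Rabs (t - s).
Proof.
  induction n; intros j Hj t s.
  - replace (comp j (pic 0 t) - comp j (pic 0 s)) with 0 by (simpl; ring).
    rewrite Rabs_R0. apply Rmult_le_pos; auto. apply Rabs_pos.
  - rewrite !comp_pic_S by auto.
    rewrite addsub2.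
    rewrite RInt_diff by (apply (G_cont _ Mb); auto).
    apply RInt_abs_bound. apply (G_cont _ Mb); auto.
    intros; auto.
Qed.

Lemma pic_cont n i z : continuous (fun s => G i (pic n s)) z.
Proof. apply (G_cont _ Mb); auto. apply pic_lip. Qed.

Lemma pic_step n : forall i t, (i < 3)%nat -> Rabs t <= Sl ->
  Rabs (comp i (pic (S n) t) - comp i (pic n t)) <= Mb * Sl * (/2)^n.
Proof.
  induction n; intros i t Hi Ht.
  - rewrite comp_pic_S by auto. simpl pic at 2.
    rewrite addsub.
    eapply Rle_trans. apply RInt_abs_bound.
    + intros. apply continuous_const.
    + intros; auto.
    + rewrite Rminus_0_r. simpl. pose proof (Rabs_pos t). nra.
  - rewrite !comp_pic_S by auto.
    rewrite addsub2.
    rewrite RInt_sub by (apply pic_cont).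
    set (X := Mb * Sl * (/2)^n).
    assert (HX : 0 <= X) by (unfold X; apply Rmult_le_pos; [nra| apply pow_le; lra]).
    eapply Rle_trans. apply (RInt_abs_bound _ _ _ (L * (3 * X))).
    + intros z. apply (continuous_minus (fun s => G i (pic (S n) s)) (fun s => G i (pic n s)));
        apply pic_cont.
    + intros z Hz. pose proof (between0 _ _ Hz).
      eapply Rle_trans. apply HGl. apply Rmult_le_compat_l; auto.
      apply vdist_bound. intros j Hj. apply IHn; auto. lra.
    + rewrite Rminus_0_r.
      assert (L * (3 * X) * Rabs t <= L * (3 * X) * Sl).
      { apply Rmult_le_compat_l; auto. apply Rmult_le_pos; lra. }
      assert (E : Mb * Sl * (/2)^(S n) = X / 2) by (unfold X; simpl; field).
      rewrite E. nra.
Qed.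
Definition clampS t := Rmax (- Sl) (Rmin Sl t).
Lemma clamp_in t : Rabs (clampS t) <= Sl.
Proof. unfold clampS, Rmax, Rmin. repeat destruct Rle_dec; split_Rabs; lra. Qed.
Lemma clamp_id t : Rabs t <= Sl -> clampS t = t.
Proof. unfold clampS, Rmax, Rmin. intros H. repeat destruct Rle_dec; split_Rabs; lra. Qed.
Lemma clamp_lip t s : Rabs (clampS t - clampS s) <= Rabs (t - s).
Proof. unfold clampS, Rmax, Rmin. repeat destruct Rle_dec; split_Rabs; lra. Qed.

Let B := Mb * Sl.
Lemma HB : 0 <= B. Proof. unfold B; nra. Qed.

Lemma pic_tail i t n k : (i < 3)%nat -> Rabs t <= Sl ->
  Rabs (comp i (pic (n + k) t) - comp i (pic n t)) <= 2 * B * ((/2)^n - (/2)^(n+k)).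
Proof.
  intros Hi Ht. apply (geom_tail (fun n => comp i (pic n t))). apply HB.
  intros m. apply pic_step; auto.
Qed.

Lemma pic_tail' i t n m : (i < 3)%nat -> Rabs t <= Sl -> (n <= m)%nat ->
  Rabs (comp i (pic m t) - comp i (pic n t)) <= 2 * B * (/2)^n.
Proof.
  intros Hi Ht Hnm. replace m with (n + (m - n))%nat by lia.
  eapply Rle_trans. apply pic_tail; auto.
  pose proof HB. assert (0 <= (/2)^(n + (m-n))) by (apply pow_le; lra).
  nra.
Qed.

Lemma pic_cauchy i t : Cauchy_crit (fun n => comp i (pic n (clampS t))).
Proof.
  intros eps Heps.
  assert (Hp : 0 < eps / (4 * B + 1)) by (pose proof HB; apply Rdiv_lt_0_compat; lra).
  destruct (pow_lt_1_zero (/2) ltac:(rewrite Rabs_right; lra) _ Hp) as [N HN].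
  exists N. intros n m Hn Hm. unfold R_dist.
  rewrite !(comp_min i).
  assert (Hi : (Nat.min i 2 < 3)%nat) by lia.
  pose proof (clamp_in t).
  specialize (HN N (le_n N)). rewrite Rabs_right in HN by (apply Rle_ge, pow_le; lra).
  pose proof HB.
  assert (H1 := pic_tail' _ _ N n Hi H Hn).
  assert (H2 := pic_tail' _ _ N m Hi H Hm).
  assert (2 * B * (/2)^N <= 2 * B * (eps / (4 * B + 1))) by (apply Rmult_le_compat_l; lra).
  assert (eps / (4 * B + 1) * (4 * B + 1) = eps) by (field; lra).
  assert (0 <= (/2)^N) by (apply pow_le; lra).
  eapply Rle_lt_trans.
  replace (comp (Nat.min i 2) (pic n (clampS t)) - comp (Nat.min i 2) (pic m (clampS t))) with
    ((comp (Nat.min i 2) (pic n (clampS t)) - comp (Nat.min i 2) (pic N (clampS t))) -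
     (comp (Nat.min i 2) (pic m (clampS t)) - comp (Nat.min i 2) (pic N (clampS t)))) by ring.
  apply Rabs_triang. rewrite Rabs_Ropp. nra.
Qed.

Definition phi i t := proj1_sig (Rcomplete.R_complete _ (pic_cauchy i t)).
Definition Phi t : R*R*R := (phi 0 t, phi 1 t, phi 2 t).
Lemma comp_Phi i t : (i < 3)%nat -> comp i (Phi t) = phi i t.
Proof. intros. destruct i as [|[|[|i]]]; try lia; reflexivity. Qed.

Lemma phi_approx i t n : (i < 3)%nat ->
  Rabs (phi i t - comp i (pic n (clampS t))) <= 2 * B * (/2)^n.
Proof.
  intros Hi. unfold phi. destruct (Rcomplete.R_complete _ (pic_cauchy i t)) as [l Hl]. simpl.
  apply eps_le. intros eps Heps.
  destruct (Hl eps Heps) as [N HN].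
  specialize (HN (Nat.max N n) ltac:(lia)). unfold R_dist in HN.
  pose proof (pic_tail' i (clampS t) n (Nat.max N n) Hi (clamp_in t) ltac:(lia)).
  replace (l - comp i (pic n (clampS t))) with
    ((comp i (pic (Nat.max N n) (clampS t)) - comp i (pic n (clampS t))) -
     (comp i (pic (Nat.max N n) (clampS t)) - l)) by ring.
  eapply Rle_lt_trans. apply Rabs_triang. rewrite Rabs_Ropp. lra.
Qed.

Lemma phi_lip i t s : (i < 3)%nat -> Rabs (phi i t - phi i s) <= Mb * Rabs (t - s).
Proof.
  intros Hi. apply (small_le _ _ (4 * B)). pose proof HB; lra.
  intros n.
  pose proof (phi_approx i t n Hi). pose proof (phi_approx i s n Hi).
  pose proof (pic_lip n i Hi (clampS t) (clampS s)).
  pose proof (clamp_lip t s).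
  assert (Mb * Rabs (clampS t - clampS s) <= Mb * Rabs (t - s)) by (apply Rmult_le_compat_l; auto).
  replace (phi i t - phi i s) with ((phi i t - comp i (pic n (clampS t))) -
     (phi i s - comp i (pic n (clampS s))) +
     (comp i (pic n (clampS t)) - comp i (pic n (clampS s)))) by ring.
  eapply Rle_trans. apply Rabs_triang. eapply Rle_trans. apply Rplus_le_compat_r.
  apply Rabs_triang. rewrite Rabs_Ropp. lra.
Qed.

Lemma Phi_cont i z : continuous (fun s => G i (Phi s)) z.
Proof.
  apply (G_cont _ Mb); auto. intros j Hj t s. rewrite !comp_Phi by auto. apply phi_lip; auto.
Qed.

Lemma phi_int i t : (i < 3)%nat -> Rabs t <= Sl ->
  phi i t = comp i a + RInt (fun s => G i (Phi s)) 0 t.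
Proof.
  intros Hi Ht.
  assert (H : Rabs (phi i t - (comp i a + RInt (fun s => G i (Phi s)) 0 t)) <= 0).
  { apply (small_le _ _ (2 * B + L * (3 * (2 * B)) * Sl)).
    pose proof HB. assert (0 <= L * (3 * (2 * B)) * Sl) by (repeat apply Rmult_le_pos; lra). lra.
    intros n.
    pose proof (phi_approx i t (S n) Hi). rewrite (clamp_id t Ht) in H.
    rewrite comp_pic_S in H by auto.
    assert (H2 : Rabs (RInt (fun s => G i (Phi s)) 0 t - RInt (fun s => G i (pic n s)) 0 t)
       <= L * (3 * (2 * B * (/2)^n)) * Rabs (t - 0)).
    { rewrite RInt_sub by (apply Phi_cont || apply pic_cont).
      apply RInt_abs_bound.
      + intros z. apply (continuous_minus (fun s => G i (Phi s)) (fun s => G i (pic n s)));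
          [apply Phi_cont | apply pic_cont].
      + intros z Hz. pose proof (between0 _ _ Hz).
        eapply Rle_trans. apply HGl. apply Rmult_le_compat_l; auto.
        apply vdist_bound. intros j Hj. rewrite comp_Phi by auto.
        pose proof (phi_approx j z n Hj). rewrite clamp_id in H1 by lra. auto. }
    rewrite Rminus_0_r in H2.
    assert (0 <= (/2)^n) by (apply pow_le; lra).
    assert (E : (/2)^(S n) = /2 * (/2)^n) by reflexivity. rewrite E in H.
    assert (L * (3 * (2 * B * (/2)^n)) * Rabs t <= L * (3 * (2 * B * (/2)^n)) * Sl).
    { apply Rmult_le_compat_l; auto. pose proof HB. repeat apply Rmult_le_pos; lra. }
    replace (phi i t - (comp i a + RInt (fun s => G i (Phi s)) 0 t)) with
      ((phi i t - (comp i a + RInt (fun s => G i (pic n s)) 0 t)) -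
       (RInt (fun s => G i (Phi s)) 0 t - RInt (fun s => G i (pic n s)) 0 t)) by ring.
    eapply Rle_trans. apply Rabs_triang. rewrite Rabs_Ropp.
    assert (2 * B * (/ 2 * (/ 2) ^ n) <= 2 * B * (/2)^n) by (pose proof HB; nra).
    nra. }
  pose proof (Rabs_pos (phi i t - (comp i a + RInt (fun s => G i (Phi s)) 0 t))).
  assert (Rabs (phi i t - (comp i a + RInt (fun s => G i (Phi s)) 0 t)) = 0) by lra.
  apply Rabs_eq_0 in H1. lra.
Qed.
Lemma phi_deriv i t : (i < 3)%nat -> Rabs t < Sl ->
  derivable_pt_lim (phi i) t (G i (Phi t)).
Proof.
  intros Hi Ht. apply is_derive_Reals.
  assert (Hp : 0 < Sl - Rabs t) by lra.
  apply (is_derive_ext_loc (fun y => comp i a + RInt (fun s => G i (Phi s)) 0 y)).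
  - exists (mkposreal _ Hp). intros y Hy. simpl in Hy.
    unfold ball in Hy; simpl in Hy; unfold AbsRing_ball, abs, minus, plus, opp in Hy; simpl in Hy.
    symmetry. apply phi_int; auto. split_Rabs; lra.
  - replace (G i (Phi t)) with (plus zero (G i (Phi t))) by (apply plus_zero_l).
    apply (is_derive_plus (fun _ => comp i a) (fun y => RInt (fun s => G i (Phi s)) 0 y)).
    + exact (@is_derive_const R_AbsRing R_NormedModule (comp i a) t).
    + apply (is_derive_RInt (fun s => G i (Phi s)) _ 0).
      * apply filter_forall. intros y. apply (@RInt_correct R_CompleteNormedModule). apply exR. apply Phi_cont.
      * apply Phi_cont.
Qed.

Lemma phi_0 i : (i < 3)%nat -> phi i 0 = comp i a.
Proof.
  intros Hi. rewrite phi_int; auto. rewrite RInt_point. unfold zero; simpl. ring.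
  rewrite Rabs_R0; lra.
Qed.

Lemma phi_bounds i m M t : (i < 3)%nat -> (forall v, m <= G i v <= M) -> 0 <= t <= Sl ->
  comp i a + t * m <= phi i t <= comp i a + t * M.
Proof.
  intros Hi Hb Ht. rewrite phi_int by (auto; split_Rabs; lra).
  assert (E1 : RInt (fun _ => m) 0 t = t * m).
  { rewrite RInt_const. unfold scal; simpl; unfold mult; simpl. ring. }
  assert (E2 : RInt (fun _ => M) 0 t = t * M).
  { rewrite RInt_const. unfold scal; simpl; unfold mult; simpl. ring. }
  split.
  - rewrite <- E1. apply Rplus_le_compat_l. apply RInt_le. lra.
    apply exR; intros; apply continuous_const. apply exR; apply Phi_cont.
    intros; apply Hb.
  - rewrite <- E2. apply Rplus_le_compat_l. apply RInt_le. lra.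
    apply exR; apply Phi_cont. apply exR; intros; apply continuous_const.
    intros; apply Hb.
Qed.

End Picard.

Definition clampI lo hi x := Rmin hi (Rmax lo x).
Lemma clampI_lip lo hi x y : Rabs (clampI lo hi x - clampI lo hi y) <= Rabs (x - y).
Proof. unfold clampI, Rmax, Rmin. repeat destruct Rle_dec; split_Rabs; lra. Qed.
Lemma clampI_in lo hi x : lo <= hi -> lo <= clampI lo hi x <= hi.
Proof. unfold clampI, Rmax, Rmin. intros. repeat destruct Rle_dec; lra. Qed.
Lemma clampI_id lo hi x : lo <= x <= hi -> clampI lo hi x = x.
Proof. unfold clampI, Rmax, Rmin. intros. repeat destruct Rle_dec; lra. Qed.

Definition Hf (d a b c : R) := - d * ((a / b) * (a / c)) + d * (b / c) + d * (c / b) - (10 * d - 8).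

Lemma Fform d a b c : 0 < a -> 0 < b -> 0 < c -> -2 * ric d a b c * a = Hf d a b c.
Proof. intros. unfold ric, Hf. field. lra. Qed.

Lemma quot_lip lo hi u u' v v' : 0 < lo -> lo <= u <= hi -> lo <= u' <= hi ->
  lo <= v <= hi -> lo <= v' <= hi ->
  Rabs (u / v - u' / v') <= hi / lo^2 * (Rabs (u - u') + Rabs (v - v')).
Proof.
  intros Hlo Hu Hu' Hv Hv'.
  set (q := u / v - u' / v').
  assert (E : q * (v * v') = (u - u') * v' + u' * (v' - v)) by (unfold q; field; lra).
  assert (E2 : Rabs q * (v * v') = Rabs ((u - u') * v' + u' * (v' - v))).
  { rewrite <- E. rewrite Rabs_mult. rewrite (Rabs_right (v * v')) by nra. reflexivity. }
  assert (B1 : Rabs ((u - u') * v' + u' * (v' - v)) <= hi * (Rabs (u - u') + Rabs (v - v'))).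
  { eapply Rle_trans. apply Rabs_triang. rewrite !Rabs_mult.
    rewrite (Rabs_right v') by lra. rewrite (Rabs_right u') by lra.
    rewrite (Rabs_minus_sym v' v).
    pose proof (Rabs_pos (u - u')). pose proof (Rabs_pos (v - v')). nra. }
  assert (Hq : 0 <= Rabs q) by apply Rabs_pos.
  assert (Hvv : lo^2 <= v * v') by nra.
  assert (Rabs q * lo^2 <= hi * (Rabs (u - u') + Rabs (v - v'))) by nra.
  assert (0 < lo^2) by nra.
  apply (Rmult_le_reg_r (lo^2)); auto.
  replace (hi / lo ^ 2 * (Rabs (u - u') + Rabs (v - v')) * lo ^ 2) with
    (hi * (Rabs (u - u') + Rabs (v - v'))) by (field; lra). auto.
Qed.

Lemma quot_bnd lo hi u v : 0 < lo -> lo <= u <= hi -> lo <= v <= hi -> Rabs (u / v) <= hi / lo.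
Proof.
  intros. rewrite Rabs_right. 
  - unfold Rdiv. apply Rmult_le_compat; try lra.
    + left; apply Rinv_0_lt_compat; lra.
    + apply Rinv_le_contravar; lra.
  - left. apply Rdiv_lt_0_compat; lra.
Qed.

Lemma prod_lip p q p' q' r : Rabs q <= r -> Rabs p' <= r ->
  Rabs (p * q - p' * q') <= r * (Rabs (p - p') + Rabs (q - q')).
Proof.
  intros Hq Hp.
  replace (p * q - p' * q') with ((p - p') * q + p' * (q - q')) by ring.
  eapply Rle_trans. apply Rabs_triang. rewrite !Rabs_mult.
  pose proof (Rabs_pos (p - p')). pose proof (Rabs_pos (q - q')). nra.
Qed.

Lemma Hf_lip d lo hi a b c a' b' c' : 0 <= d -> 0 < lo -> 
  lo <= a <= hi -> lo <= b <= hi -> lo <= c <= hi ->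
  lo <= a' <= hi -> lo <= b' <= hi -> lo <= c' <= hi ->
  Rabs (Hf d a b c - Hf d a' b' c') <=
    4 * d * hi^2 / lo^3 * (Rabs (a - a') + Rabs (b - b') + Rabs (c - c')).
Proof.
  intros Hd Hlo Ha Hb Hc Ha' Hb' Hc'.
  set (K1 := hi / lo^2). set (K2 := 4 * d * hi^2 / lo^3).
  assert (Hr : hi / lo * K1 = hi^2/lo^3) by (unfold K1; field; lra).
  assert (HK1 : K1 <= hi^2/lo^3).
  { unfold K1. replace (hi^2/lo^3) with (hi / lo^2 * (hi / lo)) by (field; lra).
    assert (1 <= hi / lo). { apply (Rmult_le_reg_r lo); auto. replace (hi / lo * lo) with hi by (field; lra). lra. }
    assert (0 <= hi / lo^2) by (apply Rdiv_le_0_compat; nra). nra. }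
  assert (HK1p : 0 <= K1) by (unfold K1; apply Rdiv_le_0_compat; nra).
  pose proof (quot_lip lo hi a a' b b' Hlo Ha Ha' Hb Hb') as Q1.
  pose proof (quot_lip lo hi a a' c c' Hlo Ha Ha' Hc Hc') as Q2.
  pose proof (quot_lip lo hi b b' c c' Hlo Hb Hb' Hc Hc') as Q3.
  pose proof (quot_lip lo hi c c' b b' Hlo Hc Hc' Hb Hb') as Q4.
  pose proof (prod_lip (a/b) (a/c) (a'/b') (a'/c') (hi/lo)
    (quot_bnd lo hi a c Hlo Ha Hc) (quot_bnd lo hi a' b' Hlo Ha' Hb')) as P.
  fold K1 in Q1, Q2, Q3, Q4.
  pose proof (Rabs_pos (a - a')). pose proof (Rabs_pos (b - b')). pose proof (Rabs_pos (c - c')).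
  set (Sg := Rabs (a - a') + Rabs (b - b') + Rabs (c - c')).
  assert (P' : Rabs ((a/b)*(a/c) - (a'/b')*(a'/c')) <= 2 * (hi^2/lo^3) * Sg).
  { eapply Rle_trans. apply P. 
    assert (0 <= hi / lo) by (apply Rdiv_le_0_compat; lra).
    assert (hi / lo * (Rabs (a / b - a' / b') + Rabs (a / c - a' / c')) <=
            hi / lo * (K1 * (Rabs (a - a') + Rabs (b - b')) + K1 * (Rabs (a - a') + Rabs (c - c')))).
    { apply Rmult_le_compat_l; lra. }
    unfold Sg. nra. }
  unfold Hf.
  replace (- d * (a / b * (a / c)) + d * (b / c) + d * (c / b) - (10 * d - 8) -
   (- d * (a' / b' * (a' / c')) + d * (b' / c') + d * (c' / b') - (10 * d - 8))) with
   (- d * ((a / b * (a / c)) - (a' / b' * (a' / c'))) + d * (b / c - b' / c') + d * (c / b - c' / b')) by ring.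
  eapply Rle_trans. apply Rabs_triang. eapply Rle_trans. apply Rplus_le_compat_r. apply Rabs_triang.
  rewrite !Rabs_mult. rewrite Rabs_Ropp. rewrite (Rabs_right d) by lra.
  assert (d * Rabs (a / b * (a / c) - a' / b' * (a' / c')) <= d * (2 * (hi^2/lo^3) * Sg)) by
    (apply Rmult_le_compat_l; lra).
  assert (d * Rabs (b / c - b' / c') <= d * (K1 * (Rabs (b - b') + Rabs (c - c')))) by
    (apply Rmult_le_compat_l; lra).
  assert (d * Rabs (c / b - c' / b') <= d * (K1 * (Rabs (c - c') + Rabs (b - b')))) by
    (apply Rmult_le_compat_l; lra).
  assert (K1 * (Rabs (b - b') + Rabs (c - c')) <= (hi^2/lo^3) * Sg).
  { unfold Sg. assert (0 <= hi^2/lo^3) by lra. nra. }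
  assert (d * (K1 * (Rabs (b - b') + Rabs (c - c'))) <= d * ((hi^2/lo^3) * Sg)) by
    (apply Rmult_le_compat_l; lra).
  assert (d * (K1 * (Rabs (c - c') + Rabs (b - b'))) <= d * ((hi^2/lo^3) * Sg)).
  { apply Rmult_le_compat_l; auto. replace (Rabs (c - c') + Rabs (b - b')) with (Rabs (b - b') + Rabs (c - c')) by ring. auto. }
  unfold K2. replace (4 * d * hi ^ 2 / lo ^ 3 * Sg) with (d * (2 * (hi^2/lo^3) * Sg) + d * ((hi^2/lo^3) * Sg) + d * ((hi^2/lo^3) * Sg)) by (field; lra).
  lra.
Qed.

Lemma le_div_compat x y z w : 0 < y -> 0 < w -> 0 <= x <= z -> w <= y -> x / y <= z / w.
Proof.
  intros. unfold Rdiv. apply Rmult_le_compat; try lra.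
  left; apply Rinv_0_lt_compat; lra. apply Rinv_le_contravar; lra.
Qed.

Lemma Hf_bounds d a b c la ha lb hb lc hc : 0 <= d -> 0 < la -> 0 < lb -> 0 < lc ->
  la <= a <= ha -> lb <= b <= hb -> lc <= c <= hc ->
  - d * ((ha / lb) * (ha / lc)) + d * (lb / hc) + d * (lc / hb) - (10 * d - 8) <= Hf d a b c <=
  - d * ((la / hb) * (la / hc)) + d * (hb / lc) + d * (hc / lb) - (10 * d - 8).
Proof.
  intros Hd Hla Hlb Hlc Ha Hb Hc. unfold Hf.
  assert (a / b <= ha / lb) by (apply le_div_compat; lra).
  assert (la / hb <= a / b) by (apply le_div_compat; lra).
  assert (a / c <= ha / lc) by (apply le_div_compat; lra).
  assert (la / hc <= a / c) by (apply le_div_compat; lra).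
  assert (b / c <= hb / lc) by (apply le_div_compat; lra).
  assert (lb / hc <= b / c) by (apply le_div_compat; lra).
  assert (c / b <= hc / lb) by (apply le_div_compat; lra).
  assert (lc / hb <= c / b) by (apply le_div_compat; lra).
  assert (0 <= la / hb) by (apply Rdiv_le_0_compat; lra).
  assert (0 <= la / hc) by (apply Rdiv_le_0_compat; lra).
  assert ((a / b) * (a / c) <= (ha / lb) * (ha / lc)) by (apply Rmult_le_compat; lra).
  assert ((la / hb) * (la / hc) <= (a / b) * (a / c)) by (apply Rmult_le_compat; lra).
  split; nra.
Qed.

Definition Hlo (d la ha lb hb lc hc : R) :=
  - d * ((ha / lb) * (ha / lc)) + d * (lb / hc) + d * (lc / hb) - (10 * d - 8).
Definition Hhi (d la ha lb hb lc hc : R) :=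
  - d * ((la / hb) * (la / hc)) + d * (hb / lc) + d * (hc / lb) - (10 * d - 8).

Definition Gd d x1 x2 x3 w (i : nat) (v : R*R*R) : R :=
  let p1 := clampI (x1 - w) (x1 + w) (c1 v) in
  let p2 := clampI (x2 - w) (x2 + w) (c2 v) in
  let p3 := clampI (x3 - w) (x3 + w) (c3 v) in
  match i with
  | 0%nat => Hf d p1 p2 p3
  | 1%nat => Hf d p2 p1 p3
  | _ => Hf d p3 p1 p2
  end.

Lemma main_param d x1 x2 x3 w lo hi Sl T Mb :
  0 < d -> 0 < w -> 0 < lo ->
  lo <= x1 - w -> x1 + w <= hi -> lo <= x2 - w -> x2 + w <= hi -> lo <= x3 - w -> x3 + w <= hi ->
  0 < Sl -> 6 * (4 * d * hi^2 / lo^3) * Sl <= 1 -> 0 < T -> T < Sl -> 0 <= Mb ->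
  let m1 := Hlo d (x1-w) (x1+w) (x2-w) (x2+w) (x3-w) (x3+w) in
  let M1 := Hhi d (x1-w) (x1+w) (x2-w) (x2+w) (x3-w) (x3+w) in
  let m2 := Hlo d (x2-w) (x2+w) (x1-w) (x1+w) (x3-w) (x3+w) in
  let M2 := Hhi d (x2-w) (x2+w) (x1-w) (x1+w) (x3-w) (x3+w) in
  let m3 := Hlo d (x3-w) (x3+w) (x1-w) (x1+w) (x2-w) (x2+w) in
  let M3 := Hhi d (x3-w) (x3+w) (x1-w) (x1+w) (x2-w) (x2+w) in
  -Mb <= m1 -> M1 <= Mb -> -Mb <= m2 -> M2 <= Mb -> -Mb <= m3 -> M3 <= Mb ->
  -w <= T * m1 -> T * M1 <= w -> -w <= T * m2 -> T * M2 <= w -> -w <= T * m3 -> T * M3 <= w ->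
  ricci_pos_def d x1 x2 x3 ->
  (forall y1 y2 y3, x1 + T * m1 <= y1 <= x1 + T * M1 -> x2 + T * m2 <= y2 <= x2 + T * M2 ->
     x3 + T * m3 <= y3 <= x3 + T * M3 -> ricci_signature_d_2d d y1 y2 y3) ->
  exists (y1 y2 y3 : R -> R) (T : R),
    0 < T /\
    ricci_flow_on d y1 y2 y3 T /\
    ricci_pos_def d (y1 0) (y2 0) (y3 0) /\
    ricci_signature_d_2d d (y1 T) (y2 T) (y3 T).
Proof.
  intros Hd Hw Hlo Hb1 Hb1' Hb2 Hb2' Hb3 Hb3' HSl HLS HT HTS HMb m1 M1 m2 M2 m3 M3
    Hm1 HM1 Hm2 HM2 Hm3 HM3 Hs1 HS1 Hs2 HS2 Hs3 HS3 Hpos Hfin.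
  set (L := 4 * d * hi^2 / lo^3).
  set (G := Gd d x1 x2 x3 w).
  assert (HL0 : 0 <= L).
  { unfold L. apply Rdiv_le_0_compat. assert (0 <= hi^2) by nra. nra. apply pow_lt; lra. }
  assert (Hin : forall x y, x - w <= clampI (x - w) (x + w) y <= x + w) by (intros; apply clampI_in; lra).
  assert (GB : forall v, m1 <= G 0%nat v <= M1 /\ m2 <= G 1%nat v <= M2 /\ m3 <= G 2%nat v <= M3).
  { intros v. unfold G, Gd. cbv zeta.
    pose proof (Hin x1 (c1 v)). pose proof (Hin x2 (c2 v)). pose proof (Hin x3 (c3 v)).
    split; [|split]; apply Hf_bounds; lra. }
  assert (HGb : forall i v, Rabs (G i v) <= Mb).
  { intros i v. destruct (GB v) as [A [B' C]].
    destruct i as [|[|i]].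
    - split_Rabs; lra.
    - split_Rabs; lra.
    - replace (G (S (S i)) v) with (G 2%nat v) by reflexivity. split_Rabs; lra. }
  assert (HGl : forall i v v', Rabs (G i v - G i v') <= L * vdist v v').
  { intros i v v'. unfold G, Gd, vdist. cbv zeta.
    pose proof (Hin x1 (c1 v)). pose proof (Hin x2 (c2 v)). pose proof (Hin x3 (c3 v)).
    pose proof (Hin x1 (c1 v')). pose proof (Hin x2 (c2 v')). pose proof (Hin x3 (c3 v')).
    pose proof (clampI_lip (x1 - w) (x1 + w) (c1 v) (c1 v')).
    pose proof (clampI_lip (x2 - w) (x2 + w) (c2 v) (c2 v')).
    pose proof (clampI_lip (x3 - w) (x3 + w) (c3 v) (c3 v')).
    destruct i as [|[|i]].
    - eapply Rle_trans. apply (Hf_lip d lo hi); lra. apply Rmult_le_compat_l; lra.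
    - eapply Rle_trans. apply (Hf_lip d lo hi); lra. apply Rmult_le_compat_l; lra.
    - eapply Rle_trans. apply (Hf_lip d lo hi); lra. apply Rmult_le_compat_l; lra. }
  set (a := (x1, x2, x3)).
  set (y := fun i => phi G L Mb Sl a HL0 HSl HLS HMb HGb HGl i).
  assert (Hbnd : forall t, 0 <= t <= T ->
     x1 + t * m1 <= y 0%nat t <= x1 + t * M1 /\ x2 + t * m2 <= y 1%nat t <= x2 + t * M2 /\
     x3 + t * m3 <= y 2%nat t <= x3 + t * M3).
  { intros t Ht. unfold y. split; [|split].
    - apply (phi_bounds G L Mb Sl a HL0 HSl HLS HMb HGb HGl 0%nat m1 M1 t); auto.
      intros v; apply GB. lra.
    - apply (phi_bounds G L Mb Sl a HL0 HSl HLS HMb HGb HGl 1%nat m2 M2 t); auto.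
      intros v; apply GB. lra.
    - apply (phi_bounds G L Mb Sl a HL0 HSl HLS HMb HGb HGl 2%nat m3 M3 t); auto.
      intros v; apply GB. lra. }
  assert (Hbox : forall t, 0 <= t <= T ->
     x1 - w <= y 0%nat t <= x1 + w /\ x2 - w <= y 1%nat t <= x2 + w /\ x3 - w <= y 2%nat t <= x3 + w).
  { intros t Ht. destruct (Hbnd t Ht) as [A [B' C]].
    assert (forall m, -w <= T * m -> -w <= t * m).
    { intros m Hm. destruct (Rle_dec 0 m); nra. }
    assert (forall m, T * m <= w -> t * m <= w).
    { intros m Hm. destruct (Rle_dec 0 m); nra. }
    pose proof (H m1 Hs1). pose proof (H m2 Hs2). pose proof (H m3 Hs3).
    pose proof (H0 M1 HS1). pose proof (H0 M2 HS2). pose proof (H0 M3 HS3). lra. }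
  exists (y 0%nat), (y 1%nat), (y 2%nat), T.
  split; [lra|]. split; [|split].
  - intros t Ht. destruct (Hbox t Ht) as [A [B' C]].
    assert (Htt : Rabs t < Sl) by (split_Rabs; lra).
    assert (E : forall i, (i < 3)%nat -> derivable_pt_lim (y i) t (G i (y 0%nat t, y 1%nat t, y 2%nat t))).
    { intros i Hi. apply (phi_deriv G L Mb Sl a HL0 HSl HLS HMb HGb HGl i t Hi Htt). }
    assert (C1 : clampI (x1 - w) (x1 + w) (y 0%nat t) = y 0%nat t) by (apply clampI_id; lra).
    assert (C2 : clampI (x2 - w) (x2 + w) (y 1%nat t) = y 1%nat t) by (apply clampI_id; lra).
    assert (C3 : clampI (x3 - w) (x3 + w) (y 2%nat t) = y 2%nat t) by (apply clampI_id; lra).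
    assert (P1 : 0 < y 0%nat t) by lra. assert (P2 : 0 < y 1%nat t) by lra. assert (P3 : 0 < y 2%nat t) by lra.
    split; [lra|]. split; [lra|]. split; [lra|].
    split; [|split].
    + pose proof (E 0%nat ltac:(lia)) as D. unfold G, Gd in D; cbv zeta in D; unfold c1, c2, c3 in D; simpl in D.
      rewrite C1, C2, C3 in D. unfold r1. rewrite Fform by lra. exact D.
    + pose proof (E 1%nat ltac:(lia)) as D. unfold G, Gd in D; cbv zeta in D; unfold c1, c2, c3 in D; simpl in D.
      rewrite C1, C2, C3 in D. unfold r2. rewrite Fform by lra. exact D.
    + pose proof (E 2%nat ltac:(lia)) as D. unfold G, Gd in D; cbv zeta in D; unfold c1, c2, c3 in D; simpl in D.
      rewrite C1, C2, C3 in D. unfold r3. rewrite Fform by lra. exact D.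
  - unfold y. rewrite !(phi_0 G L Mb Sl a HL0 HSl HLS HMb HGb HGl) by lia. exact Hpos.
  - destruct (Hbnd T ltac:(lra)) as [A [B' C]]. apply Hfin; auto.
Qed.

Lemma ric_neg d a b c ha lb hb lc hc : 0 < d -> 0 <= 10*d - 8 -> 0 < a <= ha ->
  0 < lb -> lb <= b <= hb -> 0 < lc -> lc <= c <= hc ->
  d*ha^2 - d*lb^2 - d*lc^2 + (10*d-8)*hb*hc < 0 -> ric d a b c < 0.
Proof.
  intros Hd Hk Ha Hlb Hb Hlc Hc H. unfold ric.
  assert (a^2 <= ha^2) by nra. assert (lb^2 <= b^2) by nra. assert (lc^2 <= c^2) by nra.
  assert (b * c <= hb * hc) by nra.
  assert (Hn : d * a ^ 2 - d * b ^ 2 - d * c ^ 2 + (10 * d - 8) * b * c < 0) by nra.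
  assert (0 < 2 * a * b * c) by (repeat apply Rmult_lt_0_compat; lra).
  unfold Rdiv. assert (0 < / (2 * a * b * c)) by (apply Rinv_0_lt_compat; lra). nra.
Qed.

Lemma ric_pos d a b c la lb hb lc hc : 0 < d -> 0 <= 10*d - 8 -> 0 < la <= a ->
  0 < lb -> lb <= b <= hb -> 0 < lc -> lc <= c <= hc ->
  0 < d*la^2 - d*hb^2 - d*hc^2 + (10*d-8)*lb*lc -> 0 < ric d a b c.
Proof.
  intros Hd Hk Ha Hlb Hb Hlc Hc H. unfold ric.
  assert (la^2 <= a^2) by nra. assert (b^2 <= hb^2) by nra. assert (c^2 <= hc^2) by nra.
  assert (lb * lc <= b * c) by nra.
  assert (Hn : 0 < d * a ^ 2 - d * b ^ 2 - d * c ^ 2 + (10 * d - 8) * b * c) by nra.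
  assert (0 < 2 * a * b * c) by (repeat apply Rmult_lt_0_compat; lra).
  apply Rdiv_lt_0_compat; lra.
Qed.

Lemma inst4 : exists (x1 x2 x3 : R -> R) (T : R),
    0 < T /\ ricci_flow_on 4 x1 x2 x3 T /\
    ricci_pos_def 4 (x1 0) (x2 0) (x3 0) /\
    ricci_signature_d_2d 4 (x1 T) (x2 T) (x3 T).
Proof.
  apply (main_param 4 12 1 (700001/100000) (1/1000) (999/1000) (12001/1000) (1/50000) (1/100000) 100);
    unfold Hlo, Hhi; try lra.
  - unfold ricci_pos_def, r1, r2, r3. split; [|split].
    + apply (ric_pos _ _ _ _ 12 1 1 (700001/100000) (700001/100000)); lra.
    + apply (ric_pos _ _ _ _ 1 12 12 (700001/100000) (700001/100000)); lra.
    + apply (ric_pos _ _ _ _ (700001/100000) 12 12 1 1); lra.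
  - intros y1 y2 y3 H1 H2 H3.
    assert ((239982829/20000000) <= y1 <= (1199914427/100000000)) by lra.
    assert ((4998857/5000000) <= y2 <= (49988573/50000000)) by lra.
    assert ((28000037/4000000) <= y3 <= (28000043/4000000)) by lra.
    unfold ricci_signature_d_2d, r1, r2, r3. right. right. split; [|split].
    + apply (ric_pos _ _ _ _ (239982829/20000000) (4998857/5000000) (49988573/50000000) (28000037/4000000) (28000043/4000000)); lra.
    + apply (ric_pos _ _ _ _ (4998857/5000000) (239982829/20000000) (1199914427/100000000) (28000037/4000000) (28000043/4000000)); lra.
    + apply (ric_neg _ _ _ _ (28000043/4000000) (239982829/20000000) (1199914427/100000000) (4998857/5000000) (49988573/50000000)); lra.
Qed.

Lemma inst2 : exists (x1 x2 x3 : R -> R) (T : R),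
    0 < T /\ ricci_flow_on 2 x1 x2 x3 T /\
    ricci_pos_def 2 (x1 0) (x2 0) (x3 0) /\
    ricci_signature_d_2d 2 (x1 T) (x2 T) (x3 T).
Proof.
  apply (main_param 2 10 1 (640313/100000) (1/500) (499/500) (5001/500) (1/10000) (1/20000) 40);
    unfold Hlo, Hhi; try lra.
  - unfold ricci_pos_def, r1, r2, r3. split; [|split].
    + apply (ric_pos _ _ _ _ 10 1 1 (640313/100000) (640313/100000)); lra.
    + apply (ric_pos _ _ _ _ 1 10 10 (640313/100000) (640313/100000)); lra.
    + apply (ric_pos _ _ _ _ (640313/100000) 10 10 1 1); lra.
  - intros y1 y2 y3 H1 H2 H3.
    assert ((999848843/100000000) <= y1 <= (199969999/20000000)) by lra.
    assert ((24990463/25000000) <= y2 <= (99961877/100000000)) by lra.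
    assert ((320156331/50000000) <= y3 <= (640313339/100000000)) by lra.
    unfold ricci_signature_d_2d, r1, r2, r3. right. right. split; [|split].
    + apply (ric_pos _ _ _ _ (999848843/100000000) (24990463/25000000) (99961877/100000000) (320156331/50000000) (640313339/100000000)); lra.
    + apply (ric_pos _ _ _ _ (24990463/25000000) (999848843/100000000) (199969999/20000000) (320156331/50000000) (640313339/100000000)); lra.
    + apply (ric_neg _ _ _ _ (640313339/100000000) (999848843/100000000) (199969999/20000000) (24990463/25000000) (99961877/100000000)); lra.
Qed.

Lemma inst8 : exists (x1 x2 x3 : R -> R) (T : R),
    0 < T /\ ricci_flow_on 8 x1 x2 x3 T /\
    ricci_pos_def 8 (x1 0) (x2 0) (x3 0) /\
    ricci_signature_d_2d 8 (x1 T) (x2 T) (x3 T).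
Proof.
  apply (main_param 8 12 1 (608277/100000) (3/1000) (997/1000) (12003/1000) (1/50000) (1/100000) 250);
    unfold Hlo, Hhi; try lra.
  - unfold ricci_pos_def, r1, r2, r3. split; [|split].
    + apply (ric_pos _ _ _ _ 12 1 1 (608277/100000) (608277/100000)); lra.
    + apply (ric_pos _ _ _ _ 1 12 12 (608277/100000) (608277/100000)); lra.
    + apply (ric_pos _ _ _ _ (608277/100000) 12 12 1 1); lra.
  - intros y1 y2 y3 H1 H2 H3.
    assert ((1199787657/100000000) <= y1 <= (1199789519/100000000)) by lra.
    assert ((1561683/1562500) <= y2 <= (3123367/3125000)) by lra.
    assert ((608276581/100000000) <= y3 <= (30413871/5000000)) by lra.
    unfold ricci_signature_d_2d, r1, r2, r3. right. right. split; [|split].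
    + apply (ric_pos _ _ _ _ (1199787657/100000000) (1561683/1562500) (3123367/3125000) (608276581/100000000) (30413871/5000000)); lra.
    + apply (ric_pos _ _ _ _ (1561683/1562500) (1199787657/100000000) (1199789519/100000000) (608276581/100000000) (30413871/5000000)); lra.
    + apply (ric_neg _ _ _ _ (30413871/5000000) (1199787657/100000000) (1199789519/100000000) (1561683/1562500) (3123367/3125000)); lra.
Qed.

Theorem theorem4p1 :
  forall d : R, (d = 2 \/ d = 4 \/ d = 8) ->
  exists (x1 x2 x3 : R -> R) (T : R),
    0 < T /\
    ricci_flow_on d x1 x2 x3 T /\
    ricci_pos_def d (x1 0) (x2 0) (x3 0) /\
    ricci_signature_d_2d d (x1 T) (x2 T) (x3 T).
Proof.
  intros d [H|[H|H]]; subst d; [exact inst2 | exact inst4 | exact inst8].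
Qed.
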